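(* Let $k\ge1$, let $p_1,\dots,p_k$ be a pmf (the conditional pmf $P_{X_k}(x_i)=P_X(x_i)/q_k$ described in the context), and let $a=\frac{1}{\lambda q_k}>0$. For a vector of real codeword lengths $\ell=(\ell(x_1),\dots,\ell(x_k))$ write $\mathbb{E}[L]=\sum_{i=1}^k p_i\ell(x_i)$ and $\mathbb{E}[L^2]=\sum_{i=1}^k p_i\ell(x_i)^2$. Consider the problem $$\min_{\ell}\ \frac{\mathbb{E}[L^2]+2a\mathbb{E}[L]+2a^2}{2(\mathbb{E}[L]+a)}+\mathbb{E}[L]\quad\text{s.t.}\quad \sum_{i=1}^k 2^{-\ell(x_i)}\le 1,\ \ \ell(x_i)\in\mathbb{R}^+,\ i=1,\dots,k.$$ Then the age-optimal real codeword lengths (optimal solutions of this problem) satisfy $\sum_{i=1}^k 2^{-\ell(x_i)}=1$.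
   Context: Setting: update packets arrive at a transmitter as a Poisson process of rate $\lambda>0$, each carrying an i.i.d. realization of $X$ with pmf $P_X$ on $\{x_1,\dots,x_n\}$ ordered with non-increasing probabilities; only the $k$ most probable realizations are encoded, $q_k=\sum_{\ell=1}^kP_X(x_\ell)$, and $P_{X_k}(x_i)=P_X(x_i)/q_k$ for $i\le k$. The objective above is the long term average age at the receiver under this highest $k$ selective encoding scheme with blocking and service time equal to codeword length; the integrality constraint on lengths has been relaxed to positive reals. *)

(* Defs.v *)
From HB Require Import structures.
From mathcomp Require Import all_boot all_order all_algebra.
From mathcomp Require Import all_classical all_reals all_analysis.
Set Implicit Arguments. Unset Strict Implicit. Unset Printing Implicit Defensive.
Import Order.TTheory GRing.Theory Num.Theory.
Local Open Scope ring_scope.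

Section AoI.
Variables (R : realType) (k : nat).

Definition EL (p l : 'I_k -> R) : R := \sum_(i < k) p i * l i.
Definition EL2 (p l : 'I_k -> R) : R := \sum_(i < k) p i * (l i) ^+ 2.

Definition kraft (l : 'I_k -> R) : R := \sum_(i < k) (2 : R) `^ (- l i).

Definition age_obj (a : R) (p l : 'I_k -> R) : R :=
  (EL2 p l + 2 * a * EL p l + 2 * a ^+ 2) / (2 * (EL p l + a)) + EL p l.

Definition feasible (l : 'I_k -> R) : Prop :=
  kraft l <= 1 /\ forall i, 0 < l i.

Definition age_optimal (a : R) (p l : 'I_k -> R) : Prop :=
  feasible l /\ forall l', feasible l' -> age_obj a p l <= age_obj a p l'.

End AoI.

(* Main.v *)
Require Import Defs.
From HB Require Import structures.
From mathcomp Require Import all_boot all_order all_algebra.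
From mathcomp Require Import all_classical all_reals all_analysis.
From mathcomp Require Import ring lra.
Import Order.TTheory GRing.Theory Num.Theory.
Local Open Scope ring_scope.

Lemma obj_scale (R : realType) (a t E E2 : R) :
  0 < a -> 0 < E -> 0 < E2 -> 0 < t -> t < 1 ->
  (t^+2 * E2 + 2 * a * (t * E) + 2 * a ^+ 2) / (2 * (t * E + a)) + t * E <
  (E2 + 2 * a * E + 2 * a ^+ 2) / (2 * (E + a)) + E.
Proof.
move=> a0 E0 E20 t0 t1.
have D1 : 0 < 2 * (t * E + a) by apply: mulr_gt0 => //; apply: addr_gt0 => //; apply: mulr_gt0.
have D2 : 0 < 2 * (E + a) by apply: mulr_gt0 => //; apply: addr_gt0.
apply: ler_ltD; last by rewrite -[ltRHS]mul1r ltr_pM2r.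
rewrite ler_pdivrMr // [leRHS]mulrAC ler_pdivlMr //.
have h1 : 0 <= E2 * E * t * (1 - t) by
  apply: mulr_ge0; [apply: mulr_ge0; [apply: mulr_ge0|]|]; rewrite ?subr_ge0; apply: ltW.
have h2 : 0 <= E2 * a * (1 - t^+2).
  apply: mulr_ge0; first by apply: ltW; apply: mulr_gt0.
  rewrite subr_ge0 expr2 -[1]mul1r; apply: ler_pM; try apply: ltW => //.
rewrite -subr_ge0.
have -> : (E2 + 2 * a * E + 2 * a ^+ 2) * (2 * (t * E + a)) -
  (t ^+ 2 * E2 + 2 * a * (t * E) + 2 * a ^+ 2) * (2 * (E + a)) =
  2 * (E2 * E * t * (1 - t) + E2 * a * (1 - t^+2)) by ring.
by apply: mulr_ge0 => //; apply: addr_ge0.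
Qed.

Theorem lemma1 (R : realType) (k : nat) (lam q : R) (p l : 'I_k -> R) :
  (1 <= k)%N ->
  0 < lam -> 0 < q -> q <= 1 ->
  (forall i, 0 < p i) -> \sum_(i < k) p i = 1 ->
  age_optimal (1 / (lam * q)) p l ->
  kraft l = 1.
Proof.
move=> k1 lam0 q0 q1 p0 psum [[kr lpos] opt].
have a0 : 0 < 1 / (lam * q) by rewrite divr_gt0 // mulr_gt0.
move: (1 / (lam * q)) a0 opt => a a0 opt.
have i0 : 'I_k by exact: Ordinal k1.
have s0 : 0 < kraft l.
  rewrite /kraft (bigD1 i0) //=; apply: ltr_pwDl; first exact: powR_gt0.
  by apply: sumr_ge0 => i _; exact: powR_ge0.
have E0 : 0 < EL p l.
  rewrite /EL (bigD1 i0) //=; apply: ltr_pwDl; first exact: mulr_gt0.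
  by apply: sumr_ge0 => i _; apply: ltW; apply: mulr_gt0.
have E20 : 0 < EL2 p l.
  rewrite /EL2 (bigD1 i0) //=; apply: ltr_pwDl; first by apply: mulr_gt0 => //; apply: exprn_gt0.
  by apply: sumr_ge0 => i _; apply: ltW; apply: mulr_gt0 => //; apply: exprn_gt0.
apply/eqP; rewrite eq_le kr /= leNgt; apply/negP => s1.
set s := kraft l in s0 s1.
have ln2 : 0 < ln (2 : R) by apply: ln_gt0; rewrite ltr1n.
set c := - ln s / ln 2.
have c0 : 0 < c by rewrite /c divr_gt0 // oppr_gt0 ln_lt0 // s0 s1.
have pc : (2 : R) `^ c = s^-1.
  rewrite /powR ifF; last by apply/negbTE; rewrite pnatr_eq0.
  by rewrite /c mulrVK ?unitfE ?gt_eqF // expRN lnK // posrE.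
set M := \sum_(i < k) l i.
have lM : forall i, l i <= M.
  move=> i; rewrite /M (bigD1 i) //= lerDl.
  by apply: sumr_ge0 => j _; apply: ltW.
have M0 : 0 < M by apply: lt_le_trans (lM i0).
set e := Num.min (1/2) (c / M).
have e0 : 0 < e by rewrite /e lt_min divr_gt0 // divr_gt0.
have e12 : e <= 1/2 by rewrite /e ge_min lexx.
have eM : e * M <= c by rewrite -ler_pdivlMr // /e ge_min lexx orbT.
set t := 1 - e.
have t0 : 0 < t by rewrite /t subr_gt0; apply: le_lt_trans e12 _; rewrite ltr_pdivrMr // mul1r ltr1n.
have t1 : t < 1 by rewrite /t ltrBlDr ltrDl.
pose l' := fun i => t * l i.
have feas : feasible l'.
  split; last by move=> i; apply: mulr_gt0.
  have -> : 1 = \sum_(i < k) (2 : R) `^ (- l i) * s^-1 by rewrite -mulr_suml mulfV // gt_eqF.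
  rewrite /kraft; apply: ler_sum => i _.
  have -> : - l' i = - l i + e * l i by rewrite /l' /t; ring.
  rewrite powRD; last by rewrite pnatr_eq0 implybT.
  apply: ler_wpM2l; first exact: powR_ge0.
  rewrite -pc; apply: ler_powR; first by rewrite ler1n.
  apply: le_trans eM; apply: ler_wpM2l; [exact: ltW | exact: lM].
have := opt _ feas.
have EL' : EL p l' = t * EL p l.
  by rewrite /EL mulr_sumr; apply: eq_bigr => i _; rewrite /l'; ring.
have EL2' : EL2 p l' = t ^+ 2 * EL2 p l.
  by rewrite /EL2 mulr_sumr; apply: eq_bigr => i _; rewrite /l'; ring.
rewrite /age_obj EL' EL2' => H.
have h1 := @obj_scale R a t (EL p l) (EL2 p l) a0 E0 E20 t0 t1.
by move: h1; rewrite ltNge H.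
Qed.
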